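(* Let $G=\langle(135)(246),(14)(23)(56)\rangle\le S_6$ (dihedral of order $6$), $G'=\langle G,(12)(34)(56)\rangle$ (of order $12$, with $|G':G|=2$), and $D=\{(6),(5,1),(4,2),(4,1^2),(3^2)\}$. Then: (i) $Aut_0(T_{D;G})\cong S_3\times S_2$; (ii) $Aut_0^{G'}(T_{D;G})\cong S_2\times S_2$.
   Context: For a partition $\lambda=(\lambda_1\ge\dots\ge\lambda_k>0)$ of $6$, a tabloid of shape $\lambda$ is a sequence $A=(A_1,\dots,A_k)$ of pairwise disjoint subsets of $\{1,\dots,6\}$ with $|A_i|=\lambda_i$; $T_\lambda$ is their set. $S_6$ acts by $\zeta A=(\zeta(A_1),\dots,\zeta(A_k))$. Tabloids are partially ordered by $A\le B$ iff $A_1\cup\dots\cup A_i\subseteq B_1\cup\dots\cup B_i$ for all $i\ge1$ (missing rows empty). $T_{\lambda;G}$ is the set of $G$-orbits $O_G(A)$ in $T_\lambda$ and $T_{D;G}=\bigcup_{\mu\in D}T_{\mu;G}$, ordered by $a\le b$ iff there are $A\in a$, $B\in b$ with $A\le B$. $Aut_0(T_{D;G})$ is the group of bijections $\alpha$ of $T_{D;G}$ with $\alpha(a)\le\alpha(b)\iff a\le b$ and $\alpha(T_{\mu;G})=T_{\mu;G}$ for every $\mu\in D$. The group $G'/G$ acts on $T_{D;G}$ by $(\eta G)O_G(A)=O_G(\eta A)$, and $Aut_0^{G'}(T_{D;G})$ is the subgroup of $\alpha\in Aut_0(T_{D;G})$ with $\alpha(\iota a)=\iota\alpha(a)$ for all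 $\iota\in G'/G$ and $a\in T_{D;G}$ (equivalently, automorphisms mapping each pair of distinct $G$-orbits contained in one $G'$-orbit onto such a pair). *)

(* Defs.v *)
From mathcomp Require Import all_boot all_order all_fingroup.
Set Implicit Arguments. Unset Strict Implicit. Unset Printing Implicit Defensive.


(* Points 1..6 are represented by 'I_6 (point k is the ordinal k-1). *)

Definition pt (k : nat) : 'I_6 := inord k.-1.

(* In MathComp, (s * t) x = t (s x), so tperm a b * tperm a c is the
   3-cycle (a b c). *)
(* (135)(246) *)
Definition g1 : {perm 'I_6} :=
  (tperm (pt 1) (pt 3) * tperm (pt 1) (pt 5) *
   (tperm (pt 2) (pt 4) * tperm (pt 2) (pt 6)))%g.
Definition g2 : {perm 'I_6} :=
  (tperm (pt 1) (pt 4) * tperm (pt 2) (pt 3) * tperm (pt 5) (pt 6))%g.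
Definition g3 : {perm 'I_6} :=
  (tperm (pt 1) (pt 2) * tperm (pt 3) (pt 4) * tperm (pt 5) (pt 6))%g.

Definition Gd : {group {perm 'I_6}} := (<<[set g1; g2]>>)%G.
Definition Gd' : {group {perm 'I_6}} := (<<[set g1; g2; g3]>>)%G.

(* Tabloids: rows A_1, A_2, ... indexed by 'I_6 (row i+1 is index i);
   rows beyond the number of parts of the shape are empty ("missing rows
   empty"). A partition of 6 has at most 6 parts, so 6 rows suffice. *)
Definition tab := {ffun 'I_6 -> {set 'I_6}}.

Definition is_tabloid (lam : seq nat) (A : tab) : bool :=
  [forall i : 'I_6, #|A i| == nth 0 lam i] &&
  [forall i : 'I_6, forall j : 'I_6, (i != j) ==> [disjoint A i & A j]].

Definition T_lam (lam : seq nat) : {set tab} := [set A | is_tabloid lam A].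

Definition tact (z : {perm 'I_6}) (A : tab) : tab := [ffun i => z @: A i].

Definition tab_le (A B : tab) : bool :=
  [forall i : 'I_6,
     (\bigcup_(j : 'I_6 | j <= i) A j) \subset (\bigcup_(j : 'I_6 | j <= i) B j)].

Definition orbG (G : {set {perm 'I_6}}) (A : tab) : {set tab} :=
  [set tact z A | z in G].

Definition T_lamG (lam : seq nat) (G : {set {perm 'I_6}}) : {set {set tab}} :=
  [set orbG G A | A in T_lam lam].

Definition T_DG (D : seq (seq nat)) (G : {set {perm 'I_6}}) : {set {set tab}} :=
  \bigcup_(lam <- D) T_lamG lam G.

Definition orb_le (a b : {set tab}) : bool :=
  [exists A in a, exists B in b, tab_le A B].

(* Aut_0(T_{D;G}): bijections of T_{D;G} (= permutations of the type of
   sets of tabloids supported on T_{D;G}) that preserve and reflect the order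
   and fix each T_{mu;G} (mu in D) setwise. *)
Definition Aut0 (D : seq (seq nat)) (G : {set {perm 'I_6}}) :
    {set {perm {set tab}}} :=
  [set al : {perm {set tab}} |
     [&& perm_on (T_DG D G) al,
         [forall a in T_DG D G, forall b in T_DG D G,
             orb_le (al a) (al b) == orb_le a b] &
         all (fun mu => al @: T_lamG mu G == T_lamG mu G) D]].

(* Aut_0^{G'}(T_{D;G}): those commuting with the action of G'/G given by
   (eta G) O_G(A) = O_G(eta A). *)
Definition Aut0G (D : seq (seq nat)) (G G' : {set {perm 'I_6}}) :
    {set {perm {set tab}}} :=
  [set al in Aut0 D G |
     [forall eta in G', forall a in T_DG D G, forall A in a, forall B in al a,
        al (orbG G (tact eta A)) == orbG G (tact eta B)]].

Definition D6 : seq (seq nat) :=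
  [:: [:: 6]; [:: 5; 1]; [:: 4; 2]; [:: 4; 1; 1]; [:: 3; 3]].

(* Main.v *)
Require Import Defs.
From mathcomp Require Import all_boot all_order all_fingroup.
Set Implicit Arguments. Unset Strict Implicit. Unset Printing Implicit Defensive.
Definition D6l := D6.
Fixpoint allL n m (P : seq nat -> bool) : bool := if m is m'.+1 then all (fun x => allL n m' (fun l => P (x :: l))) (iota 0 n) else P [::].
Definition compose (l1 l2 : seq nat) := [seq nth 0 l2 x | x <- l1].
Definition Gt : seq (seq nat) := [:: [:: 0; 1; 2; 3; 4; 5]; [:: 2; 3; 4; 5; 0; 1]; [:: 4; 5; 0; 1; 2; 3]; [:: 3; 2; 1; 0; 5; 4]; [:: 1; 0; 5; 4; 3; 2]; [:: 5; 4; 3; 2; 1; 0]].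
Definition Gt2 : seq (seq nat) := Gt ++ [:: [:: 1; 0; 3; 2; 5; 4]; [:: 3; 2; 5; 4; 1; 0]; [:: 5; 4; 1; 0; 3; 2]; [:: 2; 3; 0; 1; 4; 5]; [:: 0; 1; 4; 5; 2; 3]; [:: 4; 5; 2; 3; 0; 1]].
Definition Rs : seq (seq nat) := [:: [:: 0; 0; 0; 0; 0; 0]; [:: 0; 0; 0; 0; 0; 1]; [:: 0; 0; 0; 0; 1; 1]; [:: 0; 0; 0; 1; 0; 1]; [:: 0; 0; 0; 1; 1; 0]; [:: 0; 0; 1; 0; 0; 1]; [:: 0; 0; 0; 0; 1; 2]; [:: 0; 0; 0; 1; 0; 2]; [:: 0; 0; 0; 2; 0; 1]; [:: 0; 0; 0; 1; 2; 0]; [:: 0; 0; 1; 0; 0; 2]; [:: 0; 0; 0; 1; 1; 1]; [:: 0; 0; 1; 0; 1; 1]; [:: 0; 1; 0; 1; 0; 1]; [:: 0; 1; 0; 1; 1; 0]].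
Definition Rk k := nth [::] Rs k.
Definition act_l (t r : seq nat) := [seq nth 0 r (index y t) | y <- iota 0 6].
Definition orbL r := [seq act_l t r | t <- Gt].
Definition le_l (r s : seq nat) := all (fun x => nth 0 s x <= nth 0 r x) (iota 0 6).
Definition Lc a b := has (fun s => has (fun t => le_l s t) (orbL (Rk b))) (orbL (Rk a)).
Definition shapes : seq (seq nat) := [:: [:: 6]; [:: 5; 1]; [:: 4; 2]; [:: 4; 2]; [:: 4; 2]; [:: 4; 2];
  [:: 4; 1; 1]; [:: 4; 1; 1]; [:: 4; 1; 1]; [:: 4; 1; 1]; [:: 4; 1; 1]; [:: 3; 3]; [:: 3; 3]; [:: 3; 3]; [:: 3; 3]].
Definition shp k := nth [::] shapes k.
Definition wf (r : seq nat) := (size r == 6) && all (fun x => x < 6) r.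
Definition cnt (r : seq nat) i := count (pred1 i) r.
Definition CLcheck (lam : seq nat) :=
  allL 7 6 (fun r => if all (fun i => nth 0 lam i <= cnt r i) (iota 0 6) then
     [&& wf r, all (fun i => cnt r i == nth 0 lam i) (iota 0 6) &
        has (fun k => (shp k == lam) && (r \in orbL (Rk k))) (iota 0 15)] else true).

Definition B42 := [:: 2; 4; 5].
Definition B411s := [:: 6; 9; 10].
Definition B33s := [:: 14; 12; 11].
Definition B78 := [:: 7; 8].
Definition bmap (blk sl : seq nat) k := nth 0 blk (nth 0 sl (index k blk)).
Definition phi sl tl k :=
  if k \in B42 then bmap B42 sl k else if k \in B411s then bmap B411s sl k
  else if k \in B33s then bmap B33s sl k else if k \in B78 then bmap B78 tl k else k.
Definition Phl sl tl := [seq phi sl tl k | k <- iota 0 15].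
Definition P3 : seq (seq nat) := [:: [:: 0;1;2]; [:: 0;2;1]; [:: 1;0;2]; [:: 1;2;0]; [:: 2;0;1]; [:: 2;1;0]].
Definition P2 : seq (seq nat) := [:: [:: 0;1]; [:: 1;0]].
Definition emb (ul : seq nat) := 0 :: [seq x.+1 | x <- ul].
Definition iotal := [:: 0;1;2;3;5;4;6;8;7;10;9;12;11;13;14].
Definition iot t k := if t \in Gt then k else nth 0 iotal k.
Definition permlist (l : seq nat) := [&& size l == 15, uniq l & all (fun x => x < 15) l].

Definition K1 := all CLcheck D6l.
Definition K2 := all (fun k => [&& wf (Rk k), all (fun i => cnt (Rk k) i == nth 0 (shp k) i) (iota 0 6), shp k \in D6l & all wf (orbL (Rk k))]) (iota 0 15).
Definition K3 := all (fun a => all (fun b => (Rk a \in orbL (Rk b)) ==> (a == b)) (iota 0 15)) (iota 0 15).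
Definition K4 := [&& iota 0 6 \in Gt, all (fun a => all (fun b => compose a b \in Gt) Gt) Gt,
   iota 0 6 \in Gt2 & all (fun a => all (fun b => compose a b \in Gt2) Gt2) Gt2].
Definition K5 := all (fun t => all (fun k => all (fun s => act_l t s \in orbL (Rk (iot t k))) (orbL (Rk k))) (iota 0 15)) Gt2.
Definition K6 := all (fun sl => all (fun tl => let q := Phl sl tl in [&& permlist q,
   all (fun k => shp (nth 0 q k) == shp k) (iota 0 15) &
   all (fun a => all (fun b => Lc (nth 0 q a) (nth 0 q b) == Lc a b) (iota 0 15)) (iota 0 15)]) P2) P3.
Definition K7 := all (fun s1 => all (fun s2 => all (fun t1 => all (fun t2 =>
   Phl (compose s1 s2) (compose t1 t2) == compose (Phl s1 t1) (Phl s2 t2)) P2) P2) P3) P3.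
Definition K8 := all (fun s1 => all (fun s2 => all (fun t1 => all (fun t2 =>
   (Phl s1 t1 == Phl s2 t2) ==> (s1 == s2) && (t1 == t2)) P2) P2) P3) P3.
Definition K9 := all (fun sl => all (fun tl => (compose (Phl sl tl) iotal == compose iotal (Phl sl tl)) == (sl \in map emb P2)) P2) P3.
Definition K10 := all (fun u => emb u \in P3) P2 && all (fun u1 => all (fun u2 => emb (compose u1 u2) == compose (emb u1) (emb u2)) P2) P2.
Definition K12 := allL 3 3 (fun l => if uniq l then l \in P3 else true) && allL 2 2 (fun l => if uniq l then l \in P2 else true).
Definition fB u := nth 0 B411s (index u B42).
Definition hB u v := nth 0 B33s (index (if u == 2 then (if v == 4 then 5 else 4) else if u == 4 then (if v == 2 then 5 else 2) else (if v == 2 then 4 else 2)) B42).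
Definition C1 := all (fun u => all (fun x => all (fun y => (x != y) && Lc x u && Lc y u ==> (u == 3)) [:: 6;7;8;9;10]) [:: 6;7;8;9;10]) [:: 2;3;4;5].
Definition C2 := all (fun x => Lc x 3 ==> (x \in [:: 7;8])) [:: 6;7;8;9;10].
Definition C3 := all (fun u => all (fun x => Lc x u ==> (x == fB u)) [:: 6;7;8;9;10]) B42.
Definition C4 := all (fun u => all (fun v => all (fun w => (u != v) && Lc w u && Lc w v ==> (w == hB u v)) [:: 11;12;13;14]) B42) B42.
Definition C6 := all (fun u => all (fun v => all (fun w => (u != v) && ~~ Lc w u && ~~ Lc w v ==> (w == 13)) [:: 11;12;13;14]) B42) B42.
Definition qB a b c d e := [:: 0; 1; a; 3; b; c; fB a; d; e; fB b; fB c; hB a b; hB a c; 13; hB b c].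
Definition C5 := all (fun a => all (fun b => all (fun c => all (fun d => all (fun e =>
  [&& a != b, a != c, b != c & d != e] ==> has (fun sl => has (fun tl => Phl sl tl == qB a b c d e) P2) P3) B78) B78) B42) B42) B42.
Lemma K2ok : K2. Proof. vm_compute. reflexivity. Qed.
Lemma K3ok : K3. Proof. vm_compute. reflexivity. Qed.
Lemma K4ok : K4. Proof. vm_compute. reflexivity. Qed.
Lemma K5ok : K5. Proof. vm_compute. reflexivity. Qed.
Lemma K6ok : K6. Proof. vm_compute. reflexivity. Qed.
Lemma K7ok : K7. Proof. vm_compute. reflexivity. Qed.
Lemma K8ok : K8. Proof. vm_compute. reflexivity. Qed.
Lemma K9ok : K9. Proof. vm_compute. reflexivity. Qed.
Lemma K10ok : K10. Proof. vm_compute. reflexivity. Qed.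
Lemma K12ok : K12. Proof. vm_compute. reflexivity. Qed.
Lemma C1ok : C1. Proof. vm_compute. reflexivity. Qed.
Lemma C2ok : C2. Proof. vm_compute. reflexivity. Qed.
Lemma C3ok : C3. Proof. vm_compute. reflexivity. Qed.
Lemma C4ok : C4. Proof. vm_compute. reflexivity. Qed.
Lemma C6ok : C6. Proof. vm_compute. reflexivity. Qed.
Lemma C5ok : C5. Proof. vm_compute. reflexivity. Qed.
Lemma K1ok : K1. Proof. vm_compute. reflexivity. Qed.

Lemma allL_ok n m P : allL n m P -> forall l, size l = m -> all (fun x => x < n) l -> P l.
Proof.
elim: m P => [|m IH] P /= H [|x l] //= [Hs] /andP[Hx Hl].
have /allP/(_ x) := H; rewrite mem_iota add0n => /(_ Hx) H2.
exact: (IH _ H2 l Hs Hl).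
Qed.

Lemma forall_iota n (P : nat -> bool) : [forall i : 'I_n, P i] = all P (iota 0 n).
Proof.
apply/forallP/allP => [H x | H i]; last by apply: H; rewrite mem_iota /= add0n.
rewrite mem_iota add0n /= => Hx; exact: (H (Ordinal Hx)).
Qed.

Section LS.
Variable n : nat.
Definition ls (s : {perm 'I_n.+1}) := [seq val (s (inord i)) | i <- iota 0 n.+1].
Lemma size_ls s : size (ls s) = n.+1. Proof. by rewrite size_map size_iota. Qed.
Lemma nth_ls s i : i < n.+1 -> nth 0 (ls s) i = s (inord i).
Proof. by move=> Hi; rewrite (nth_map 0) ?size_iota // nth_iota. Qed.
Lemma nth_ls' s (i : 'I_n.+1) : nth 0 (ls s) i = s i.
Proof. by rewrite nth_ls // inord_val. Qed.
Lemma ls_lt s : all (fun x => x < n.+1) (ls s).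
Proof. by apply/allP => x; rewrite /ls => /mapP[i _ ->]; exact: ltn_ord. Qed.
Lemma ls_uniq s : uniq (ls s).
Proof.
rewrite map_inj_in_uniq ?iota_uniq // => a b; rewrite !mem_iota !add0n /= => Ha Hb.
by move/val_inj/perm_inj => /(congr1 (@nat_of_ord _)); rewrite !inordK.
Qed.
Lemma lsM s t : ls (s * t) = compose (ls s) (ls t).
Proof.
apply: (@eq_from_nth _ 0); first by rewrite /compose size_map !size_ls.
move=> i; rewrite size_ls => Hi.
by rewrite /compose (nth_map 0) ?size_ls // !nth_ls // permM inord_val.
Qed.
Lemma ls1 : ls 1 = iota 0 n.+1.
Proof.
apply: (@eq_from_nth _ 0); first by rewrite size_ls size_iota.
by move=> i; rewrite size_ls => Hi; rewrite nth_ls // perm1 inordK // nth_iota.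
Qed.
Lemma ls_inj : injective ls.
Proof. by move=> s t H; apply/permP => i; apply: ord_inj; rewrite -!nth_ls' H. Qed.
Lemma ex_ls l : size l = n.+1 -> uniq l -> all (fun x => x < n.+1) l ->
  exists s, ls s = l.
Proof.
move=> Hs Hu /allP Ha.
have inj : injective (fun i : 'I_n.+1 => (inord (nth 0 l i) : 'I_n.+1)).
  move=> i j /(congr1 (@nat_of_ord _)); rewrite !inordK; last 2 first.
  - by apply: Ha; rewrite mem_nth // Hs.
  - by apply: Ha; rewrite mem_nth // Hs.
  by move/eqP; rewrite nth_uniq ?Hs // => /eqP/val_inj.
exists (perm inj); apply: (@eq_from_nth _ 0); first by rewrite size_ls.
move=> i; rewrite size_ls => Hi; rewrite nth_ls // permE /= inordK // inordK //.
by apply: Ha; rewrite mem_nth // Hs.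
Qed.
Lemma ls_tperm a b : a < n.+1 -> b < n.+1 ->
  ls (tperm (inord a) (inord b)) = [seq (if i == a then b else if i == b then a else i) | i <- iota 0 n.+1].
Proof.
move=> Ha Hb; apply/eq_in_map => i; rewrite mem_iota add0n /= => Hi.
have E : forall x y, x < n.+1 -> y < n.+1 -> ((inord x : 'I_n.+1) == inord y) = (x == y).
  move=> x y Hx Hy; apply/eqP/eqP => [H|->] //.
  by move/(congr1 (@nat_of_ord _)): H; rewrite !inordK.
have F : forall x, x < n.+1 -> (inord i : 'I_n.+1) = inord x -> i = x.
  by move=> x Hx /(congr1 (@nat_of_ord _)); rewrite !inordK.
case: tpermP => [/F H|/F H|Hia Hib].
- by rewrite inordK // (H Ha) eqxx.
- rewrite inordK // (H Hb) eqxx; by case: eqP.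
- rewrite inordK //.
  have -> : (i == a) = false by apply/negbTE/eqP => Hx; apply: Hia; rewrite Hx.
  by have -> : (i == b) = false by apply/negbTE/eqP => Hx; apply: Hib; rewrite Hx.
Qed.
End LS.

Lemma KK : K2 /\ K3 /\ K4 /\ K5 /\ K6 /\ K7 /\ K8 /\ K9 /\ K10 /\ K12 /\ C1 /\ C2 /\ C3 /\ C4 /\ C6 /\ C5.
Proof. exact: (conj K2ok (conj K3ok (conj K4ok (conj K5ok (conj K6ok (conj K7ok (conj K8ok (conj K9ok (conj K10ok (conj K12ok (conj C1ok (conj C2ok (conj C3ok (conj C4ok (conj C6ok C5ok))))))))))))))). Qed.

Notation pl := (@ls 5).
Lemma pl_g1 : pl g1 = nth [::] Gt 1.
Proof. rewrite /g1 !lsM /pt !ls_tperm //; vm_compute; reflexivity. Qed.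
Lemma pl_g2 : pl g2 = nth [::] Gt 3.
Proof. rewrite /g2 !lsM /pt !ls_tperm //; vm_compute; reflexivity. Qed.
Lemma pl_g3 : pl g3 = nth [::] Gt2 6.
Proof. rewrite /g3 !lsM /pt !ls_tperm //; vm_compute; reflexivity. Qed.

Lemma SG_group (T : seq (seq nat)) : iota 0 6 \in T -> all (fun a => all (fun b => compose a b \in T) T) T ->
  group_set [set z : {perm 'I_6} | pl z \in T].
Proof.
move=> H1 /allP H2; apply/group_setP; split; first by rewrite inE ls1.
move=> x y; rewrite !inE lsM => Hx Hy; exact: (allP (H2 _ Hx)).
Qed.

Lemma Gd_sub z : z \in Gd -> pl z \in Gt.
Proof.
have [_ [_ [K4 _]]] := KK; case/and4P: K4 => H1 H2 _ _.
have Sg := SG_group H1 H2.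
have : (<<[set g1; g2]>> \subset Group Sg)%g.
  rewrite gen_subG; apply/subsetP => x; rewrite !inE => /orP[]/eqP->.
  - by rewrite pl_g1.
  - by rewrite pl_g2.
by move/subsetP => H /H; rewrite inE.
Qed.

Lemma Gd'_sub z : z \in Gd' -> pl z \in Gt2.
Proof.
have [_ [_ [K4 _]]] := KK; case/and4P: K4 => _ _ H1 H2.
have Sg := SG_group H1 H2.
have : (<<[set g1; g2; g3]>> \subset Group Sg)%g.
  rewrite gen_subG; apply/subsetP => x; rewrite !inE => /orP[/orP[]|]/eqP->.
  - by rewrite pl_g1.
  - by rewrite pl_g2.
  - by rewrite pl_g3.
by move/subsetP => H /H; rewrite inE.
Qed.

Definition words : seq {perm 'I_6} := [:: 1; g1; g1 * g1; g2; g1 * g2; g1 * g1 * g2]%g.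

Lemma words_Gt : map pl words = Gt.
Proof. rewrite /= !lsM ls1 /pt !ls_tperm //; vm_compute; reflexivity. Qed.

Lemma words_Gd : all (fun z => z \in Gd) words.
Proof.
have h1 : g1 \in Gd by rewrite mem_gen // !inE eqxx.
have h2 : g2 \in Gd by rewrite mem_gen // !inE eqxx orbT.
apply/allP => z; rewrite !inE => /orP[/eqP->|/orP[/eqP->|/orP[/eqP->|/orP[/eqP->|/orP[/eqP->|/eqP->]]]]].
- exact: group1.
- exact: h1.
- exact: (groupM h1 h1).
- exact: h2.
- exact: (groupM h1 h2).
- exact: (groupM (groupM h1 h1) h2).
Qed.

Lemma Gd_ex t : t \in Gt -> exists2 z, z \in Gd & pl z = t.
Proof.
rewrite -words_Gt => /mapP[z Hz ->]; exists z => //; exact: (allP words_Gd).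
Qed.

Lemma g3_Gd' : g3 \in Gd'.
Proof. by rewrite mem_gen // !inE eqxx !orbT. Qed.

Definition tabl (r : seq nat) : tab := [ffun i : 'I_6 => [set x : 'I_6 | nth 0 r x == i]].

Lemma mem_imset_perm (z : {perm 'I_6}) (A : {set 'I_6}) y : (y \in z @: A) = ((z^-1)%g y \in A).
Proof.
apply/imsetP/idP => [[x Hx ->]|H]; first by rewrite permK.
by exists ((z^-1)%g y) => //; rewrite permKV.
Qed.

Lemma index_pl z (y : 'I_6) : index (y : nat) (pl z) = (z^-1)%g y.
Proof.
have <- : nth 0 (pl z) ((z^-1)%g y) = y by rewrite nth_ls' permKV.
by rewrite index_uniq ?ls_uniq ?size_ls.
Qed.

Lemma tact_tabl z r : tact z (tabl r) = tabl (act_l (pl z) r).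
Proof.
apply/ffunP => i; rewrite !ffunE; apply/setP => y.
rewrite mem_imset_perm !inE /act_l (nth_map 0) ?size_iota ?ltn_ord //.
by rewrite nth_iota ?ltn_ord // add0n index_pl.
Qed.

Lemma tabl_inj r s : wf r -> wf s -> tabl r = tabl s -> r = s.
Proof.
move=> /andP[/eqP Hr /allP Ar] /andP[/eqP Hs /allP As] H.
apply: (@eq_from_nth _ 0); first by rewrite Hr Hs.
move=> x; rewrite Hr => Hx.
have Hrx : nth 0 r x < 6 by apply: Ar; rewrite mem_nth // Hr.
have := congr1 (fun A : tab => (Ordinal Hx) \in A (Ordinal Hrx)) H.
by rewrite /= !ffunE !inE /= eqxx => /esym /eqP.
Qed.

Lemma bigcup_tabl r (i : 'I_6) : wf r ->
  \bigcup_(j : 'I_6 | j <= i) (tabl r) j = [set x : 'I_6 | nth 0 r x <= i].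
Proof.
move=> /andP[/eqP Hr /allP Ar]; apply/setP => x; rewrite inE.
apply/bigcupP/idP => [[j Hj]|H]; first by rewrite ffunE inE => /eqP ->.
have Hrx : nth 0 r x < 6 by apply: Ar; rewrite mem_nth // Hr ltn_ord.
by exists (Ordinal Hrx) => //; rewrite ffunE inE.
Qed.

Lemma tab_le_tabl r s : wf r -> wf s -> tab_le (tabl r) (tabl s) = le_l r s.
Proof.
move=> wr ws; have [/eqP Hr /allP Ar] := andP wr.
rewrite /tab_le /le_l; apply/forallP/allP => [H x|H i].
  rewrite mem_iota add0n /= => Hx.
  have Hrx : nth 0 r x < 6 by apply: Ar; rewrite mem_nth // Hr.
  have := H (Ordinal Hrx); rewrite !bigcup_tabl // => /subsetP/(_ (Ordinal Hx)).
  by rewrite !inE /= leqnn => /(_ isT).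
rewrite !bigcup_tabl //; apply/subsetP => x; rewrite !inE => Hx.
apply: leq_trans Hx; apply: H; by rewrite mem_iota add0n ltn_ord.
Qed.

Lemma card_tabl r (i : nat) : size r = 6 -> #|[set x : 'I_6 | nth 0 r x == i]| = cnt r i.
Proof.
move=> Hr; rewrite cardsE cardE /enum_mem size_filter -enumT.
transitivity (count (fun n => nth 0 r n == i) (iota 0 6)).
  by rewrite -val_enum_ord count_map.
by rewrite /cnt -[in RHS](mkseq_nth 0 r) Hr /mkseq count_map.
Qed.

Lemma is_tabloid_tabl lam r : wf r ->
  is_tabloid lam (tabl r) = all (fun i => cnt r i == nth 0 lam i) (iota 0 6).
Proof.
move=> wr; have [/eqP Hr _] := andP wr; rewrite /is_tabloid.
have -> : [forall i : 'I_6, forall j : 'I_6, (i != j) ==> [disjoint (tabl r) i & (tabl r) j]].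
  apply/forallP => i; apply/forallP => j; apply/implyP => Hij; rewrite !ffunE.
  rewrite disjoint_subset; apply/subsetP => x; rewrite !inE => /eqP H1; apply/negP => /eqP H2.
  by move/negP: Hij; apply; apply/eqP/ord_inj; rewrite -H1 -H2.
rewrite andbT -forall_iota; apply: eq_forallb => i.
by rewrite ffunE card_tabl.
Qed.

Lemma tact1 A : tact 1 A = A.
Proof.
apply/ffunP => i; rewrite ffunE; apply/setP => x.
by rewrite mem_imset_perm invg1 perm1.
Qed.

Lemma tactM z w A : tact (z * w) A = tact w (tact z A).
Proof.
apply/ffunP => i; rewrite !ffunE; apply/setP => x.
by rewrite !mem_imset_perm invMg permM.
Qed.

Lemma orbG_eq (G : {group {perm 'I_6}}) A B : B \in orbG G A -> orbG G B = orbG G A.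
Proof.
case/imsetP => z Hz ->; apply/setP => C; apply/imsetP/imsetP => [[w Hw ->]|[w Hw ->]].
  by exists (z * w)%g; rewrite ?groupM // tactM.
exists (z^-1 * w)%g; first by rewrite groupM ?groupV.
by rewrite -tactM mulKVg.
Qed.

Lemma mem_orbG_self (G : {group {perm 'I_6}}) A : A \in orbG G A.
Proof. by apply/imsetP; exists 1%g; rewrite ?group1 ?tact1. Qed.

Lemma orbP r A : A \in orbG Gd (tabl r) <-> exists2 t, t \in Gt & A = tabl (act_l t r).
Proof.
split => [/imsetP[z Hz ->]|[t Ht ->]].
  by exists (pl z); [exact: Gd_sub | rewrite tact_tabl].
have [z Hz Ez] := Gd_ex Ht; apply/imsetP; exists z => //; by rewrite tact_tabl Ez.
Qed.

Definition o k := orbG Gd (tabl (Rk k)).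

Lemma orbL_mem t r : t \in Gt -> act_l t r \in orbL r.
Proof. by move=> Ht; exact: (map_f (fun t => act_l t r) Ht). Qed.

Lemma K2P k : k < 15 -> [/\ wf (Rk k), all (fun i => cnt (Rk k) i == nth 0 (shp k) i) (iota 0 6), shp k \in D6 & all wf (orbL (Rk k))].
Proof.
move=> Hk; have [K2 _] := KK; move/allP: K2 => /(_ k); rewrite mem_iota add0n => /(_ Hk).
by case/and4P.
Qed.

Lemma o_inj a b : a < 15 -> b < 15 -> o a = o b -> a = b.
Proof.
move=> Ha Hb E; have := mem_orbG_self Gd (tabl (Rk a)); rewrite -/(o a) E.
case/orbP => t Ht /tabl_inj H.
have [wa _ _ _] := K2P Ha; have [_ _ _ /allP wb] := K2P Hb.
have Hm : act_l t (Rk b) \in orbL (Rk b) by apply: orbL_mem.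
have {}H := H wa (wb _ Hm); rewrite -H in Hm.
have [_ [K3 _]] := KK; move/allP: K3 => /(_ a); rewrite mem_iota add0n => /(_ Ha).
by move/allP/(_ b); rewrite mem_iota add0n => /(_ Hb); rewrite Hm => /eqP.
Qed.

Lemma tabloid_rep lam A : lam \in D6 -> is_tabloid lam A ->
  exists k, [/\ k < 15, shp k = lam & A \in o k].
Proof.
move=> Hlam /andP[/forallP Hc /forallP Hd].
pose f x := if [pick j : 'I_6 | (inord x : 'I_6) \in A j] is Some j then val j else 6.
pose r := [seq f x | x <- iota 0 6].
have Hpick : forall (x i : 'I_6), x \in A i -> f x = i.
  move=> x i Hx; rewrite /f inord_val; case: pickP => [j Hj|/(_ i)]; last by rewrite Hx.
  case: (eqVneq i j) => [->//|Hij].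
  have := Hd i; move/forallP/(_ j); rewrite Hij /= => /disjointFr/(_ Hx).
  by rewrite Hj.
have Hsz : size r = 6 by rewrite size_map size_iota.
have Hr : all (fun x => x < 7) r.
  apply/allP => y /mapP[x _ ->]; rewrite /f; case: pickP => [j _|_] //.
  exact: leq_trans (ltn_ord j) _.
have Hsub : forall i : 'I_6, A i \subset (tabl r) i.
  move=> i; apply/subsetP => x Hx; rewrite ffunE inE (nth_map 0) ?size_iota ?ltn_ord //.
  by rewrite nth_iota ?ltn_ord // add0n (Hpick _ _ Hx).
have Hle : all (fun i => nth 0 lam i <= cnt r i) (iota 0 6).
  apply/allP => i; rewrite mem_iota add0n => Hi.
  rewrite -(eqP (Hc (Ordinal Hi))) -card_tabl //.
  by have := subset_leq_card (Hsub (Ordinal Hi)); rewrite ffunE.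
have := K1ok; rewrite /K1 => /allP/(_ lam Hlam).
move/allL_ok/(_ r Hsz Hr); rewrite Hle => /and3P[Hwf Hcnt /hasP[k Hk /andP[/eqP Hs Hm]]].
exists k; split => //; first by move: Hk; rewrite mem_iota.
have -> : A = tabl r.
  apply/ffunP => i; apply/eqP; rewrite eqEcard Hsub /=.
  rewrite ffunE card_tabl // (eqP (Hc i)).
  by move/allP: Hcnt => /(_ i); rewrite mem_iota add0n ltn_ord => /(_ isT)/eqP ->.
case/mapP: Hm => t Ht ->; apply/orbP; by exists t.
Qed.

Lemma TlamP lam x : lam \in D6 ->
  x \in T_lamG lam Gd <-> exists k, [/\ k < 15, shp k = lam & x = o k].
Proof.
move=> Hlam; split => [/imsetP[A HA ->]|[k [Hk Hs ->]]].
  rewrite inE in HA; have [k [Hk Hs HAk]] := tabloid_rep Hlam HA.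
  by exists k; split => //; rewrite (orbG_eq HAk).
apply/imsetP; exists (tabl (Rk k)) => //.
have [wk Hc _ _] := K2P Hk; by rewrite inE is_tabloid_tabl // -Hs.
Qed.

Lemma mem_bigcup_seq (T : finType) (I : eqType) (s : seq I) (F : I -> {set T}) x :
  (x \in \bigcup_(i <- s) F i) = has (fun i => x \in F i) s.
Proof. by elim: s => [|i s IH]; rewrite ?big_nil ?inE // big_cons inE IH. Qed.

Lemma XP x : x \in T_DG D6 Gd <-> exists2 k, k < 15 & x = o k.
Proof.
rewrite /T_DG mem_bigcup_seq; split => [/hasP[lam Hl /(TlamP _ Hl)[k [Hk _ ->]]]|[k Hk ->]].
  by exists k.
have [_ _ Hs _] := K2P Hk; apply/hasP; exists (shp k) => //.
by apply/(TlamP _ Hs); exists k.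
Qed.

Lemma o_X k : k < 15 -> o k \in T_DG D6 Gd.
Proof. by move=> Hk; apply/XP; exists k. Qed.

Lemma orb_le_o a b : a < 15 -> b < 15 -> orb_le (o a) (o b) = Lc a b.
Proof.
move=> Ha Hb; have [_ _ _ /allP wa] := K2P Ha; have [_ _ _ /allP wb] := K2P Hb.
apply/existsP/hasP => [[A /andP[/orbP[t Ht ->] /existsP[B /andP[/orbP[t' Ht' ->] Hle]]]]|[s Hs /hasP[s' Hs' Hle]]].
  exists (act_l t (Rk a)); first exact: orbL_mem.
  apply/hasP; exists (act_l t' (Rk b)); first exact: orbL_mem.
  rewrite -tab_le_tabl //; [apply: wa | apply: wb]; exact: orbL_mem.
exists (tabl s); apply/andP; split.
  by case/mapP: Hs => t Ht ->; apply/orbP; exists t.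
apply/existsP; exists (tabl s'); apply/andP; split.
  by case/mapP: Hs' => t Ht ->; apply/orbP; exists t.
by rewrite tab_le_tabl //; [exact: wa | exact: wb].
Qed.

Lemma classify (p : nat -> nat) :
  (forall k, k < 15 -> shp (p k) = shp k) ->
  (forall a b, a < 15 -> b < 15 -> Lc (p a) (p b) = Lc a b) ->
  (forall a b, a < 15 -> b < 15 -> p a = p b -> a = b) ->
  exists sl tl, [/\ sl \in P3, tl \in P2 & forall k, k < 15 -> p k = nth 0 (Phl sl tl) k].
Proof.
move=> Hs HL Hi.
have pr : forall k, k < 15 -> shp k = shp (p k) -> p k < 15.
  move=> k Hk E; case: (ltnP (p k) 15) => [//|H]; move: E.
  rewrite [shp (p k)]/shp nth_default //.
  have : all (fun k => shp k != [::]) (iota 0 15) by vm_compute.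
  by move/allP/(_ k); rewrite mem_iota add0n => /(_ Hk) /eqP.
have blk : forall k, k < 15 -> p k \in [seq v <- iota 0 15 | shp v == shp k].
  move=> k Hk; rewrite mem_filter Hs // eqxx mem_iota add0n /=.
  by apply: pr => //; rewrite Hs.
have ne : forall a b, a < 15 -> b < 15 -> a != b -> p a != p b.
  by move=> a b Ha Hb Hab; apply/eqP => /Hi => /(_ Ha Hb) E; rewrite E eqxx in Hab.
have B0 : [seq v <- iota 0 15 | shp v == shp 0] = [:: 0] by vm_compute.
have B1 : [seq v <- iota 0 15 | shp v == shp 1] = [:: 1] by vm_compute.
have lt15 : forall k (l : seq nat), k \in l -> all (fun x => x < 15) l -> k < 15.
  by move=> k l Hk /allP /(_ _ Hk).
have B2 : forall k, k \in [:: 2;3;4;5] -> [seq v <- iota 0 15 | shp v == shp k] = [:: 2;3;4;5].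
  move=> k Hk; have : all (fun k => [seq v <- iota 0 15 | shp v == shp k] == [:: 2;3;4;5]) [:: 2;3;4;5] by vm_compute.
  by move/allP/(_ _ Hk)/eqP.
have B6 : forall k, k \in [:: 6;7;8;9;10] -> [seq v <- iota 0 15 | shp v == shp k] = [:: 6;7;8;9;10].
  move=> k Hk; have : all (fun k => [seq v <- iota 0 15 | shp v == shp k] == [:: 6;7;8;9;10]) [:: 6;7;8;9;10] by vm_compute.
  by move/allP/(_ _ Hk)/eqP.
have B11 : forall k, k \in [:: 11;12;13;14] -> [seq v <- iota 0 15 | shp v == shp k] = [:: 11;12;13;14].
  move=> k Hk; have : all (fun k => [seq v <- iota 0 15 | shp v == shp k] == [:: 11;12;13;14]) [:: 11;12;13;14] by vm_compute.
  by move/allP/(_ _ Hk)/eqP.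
have E0 : p 0 = 0 by have := blk 0 isT; rewrite B0 inE => /eqP.
have E1 : p 1 = 1 by have := blk 1 isT; rewrite B1 inE => /eqP.
have M42 : forall k, k \in [:: 2;3;4;5] -> p k \in [:: 2;3;4;5].
  move=> k Hk; rewrite -(B2 k Hk); apply: blk; exact: (lt15 _ _ Hk isT).
have M411 : forall k, k \in [:: 6;7;8;9;10] -> p k \in [:: 6;7;8;9;10].
  move=> k Hk; rewrite -(B6 k Hk); apply: blk; exact: (lt15 _ _ Hk isT).
have M33 : forall k, k \in [:: 11;12;13;14] -> p k \in [:: 11;12;13;14].
  move=> k Hk; rewrite -(B11 k Hk); apply: blk; exact: (lt15 _ _ Hk isT).
have E3 : p 3 = 3.
  move/allP: C1ok => /(_ _ (M42 3 isT))/allP/(_ _ (M411 7 isT))/allP/(_ _ (M411 8 isT)).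
  by rewrite !HL // ne //= => /eqP.
have M78 : forall k, k \in [:: 7;8] -> p k \in [:: 7;8].
  move=> k Hk; move/allP: C2ok => /(_ _ (M411 k _)).
  have Hk' : k \in [:: 6;7;8;9;10] by move: Hk; rewrite !inE => /orP[]->; rewrite ?orbT.
  have Hk15 : k < 15 := lt15 _ _ Hk isT.
  move=> /(_ Hk'); rewrite -E3 HL //; move: Hk; by rewrite !inE => /orP[]/eqP->.
have M245 : forall k, k \in [:: 2;4;5] -> p k \in B42.
  move=> k Hk.
  have Hk' : k \in [:: 2;3;4;5] by move: Hk; rewrite !inE => /or3P[]->; rewrite ?orbT.
  have Hk15 : k < 15 := lt15 _ _ Hk isT.
  have Hk3 : k != 3 by move: Hk; rewrite !inE => /or3P[]/eqP->.
  have := M42 k Hk'; have := ne k 3 Hk15 isT Hk3; rewrite E3.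
  by rewrite !inE => /negPf H3; rewrite H3 /=.
have F : forall k u, k \in [:: 6;7;8;9;10] -> u \in [:: 2;4;5] -> Lc k u -> p k = fB (p u).
  move=> k u Hk Hu HLc; move/allP: C3ok => /(_ _ (M245 u Hu))/allP/(_ _ (M411 k Hk)).
  have Hk15 : k < 15 := lt15 _ _ Hk isT.
  have Hu15 : u < 15 := lt15 _ _ Hu isT.
  by rewrite HL // HLc => /eqP.
have E6 := F 6 2 isT isT isT.
have E9 := F 9 4 isT isT isT.
have E10 := F 10 5 isT isT isT.
have H : forall w u v, w \in [:: 11;12;13;14] -> u \in [:: 2;4;5] -> v \in [:: 2;4;5] -> u != v ->
    Lc w u -> Lc w v -> p w = hB (p u) (p v).
  move=> w u v Hw Hu Hv Huv H1 H2.
  move/allP: C4ok => /(_ _ (M245 u Hu))/allP/(_ _ (M245 v Hv))/allP/(_ _ (M33 w Hw)).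
  have Hw15 : w < 15 := lt15 _ _ Hw isT.
  have Hu15 : u < 15 := lt15 _ _ Hu isT.
  have Hv15 : v < 15 := lt15 _ _ Hv isT.
  rewrite !HL // H1 H2 => /implyP X; apply/eqP; apply: X.
  by rewrite !andbT; apply: ne.
have E11 := H 11 2 4 isT isT isT isT isT isT.
have E12 := H 12 2 5 isT isT isT isT isT isT.
have E14 := H 14 4 5 isT isT isT isT isT isT.
have E13 : p 13 = 13.
  move/allP: C6ok => /(_ _ (M245 2 isT))/allP/(_ _ (M245 4 isT))/allP/(_ _ (M33 13 isT)).
  rewrite !HL // => /implyP X; apply/eqP; apply: X.
  apply/andP; split; last by vm_compute.
  apply/andP; split; last by vm_compute.
  exact: ne.
move/allP: C5ok => /(_ _ (M245 2 isT))/allP/(_ _ (M245 4 isT))/allP/(_ _ (M245 5 isT)).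
move/allP/(_ _ (M78 7 isT))/allP/(_ _ (M78 8 isT)) => /implyP X.
have : has (fun sl => has (fun tl => Phl sl tl == qB (p 2) (p 4) (p 5) (p 7) (p 8)) P2) P3.
  by apply: X; apply/and4P; split; apply: ne.
move=> /hasP[sl Hsl /hasP[tl Htl /eqP Heq]].
have Hq : qB (p 2) (p 4) (p 5) (p 7) (p 8) = map p (iota 0 15).
  rewrite /qB [map _ _]/= E0 E1 E3 E6 E9 E10 E11 E12 E13 E14; reflexivity.
exists sl, tl; split; [exact: Hsl | exact: Htl | move=> k Hk].
by rewrite Heq Hq (nth_map 0) ?size_iota // nth_iota.
Qed.

Notation X := (T_DG D6 Gd).
Definition oi (x : {set tab}) := find (fun j => x == o j) (iota 0 15).

Lemma oiK k : k < 15 -> oi (o k) = k.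
Proof.
move=> Hk.
have Hh : has (fun j => o k == o j) (iota 0 15) by apply/hasP; exists k; rewrite ?mem_iota.
have Hj : oi (o k) < 15 by rewrite -[15](size_iota 0) -has_find.
have := nth_find 0 Hh; rewrite -/(oi (o k)) nth_iota // add0n => /eqP/o_inj.
by move=> /(_ Hk Hj).
Qed.

Lemma oiP x : x \in X -> oi x < 15 /\ x = o (oi x).
Proof. by move=> Hx; have [k Hk E] := (XP x).1 Hx; rewrite E oiK. Qed.

Lemma permlist_size l : permlist l -> size l = 15.
Proof. by case/and3P => /eqP. Qed.

Lemma permlist_lt l k : permlist l -> k < 15 -> nth 0 l k < 15.
Proof. by case/and3P => /eqP Hs _ /allP Ha Hk; apply: Ha; rewrite mem_nth // Hs. Qed.

Lemma permlist_inj l a b : permlist l -> a < 15 -> b < 15 -> nth 0 l a = nth 0 l b -> a = b.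
Proof. by case/and3P => /eqP Hs Hu _ Ha Hb /eqP; rewrite nth_uniq ?Hs // => /eqP. Qed.

Definition Lf (l : seq nat) (x : {set tab}) :=
  if permlist l && (x \in X) then o (nth 0 l (oi x)) else x.

Lemma Lf_inj l : injective (Lf l).
Proof.
rewrite /Lf; case: (boolP (permlist l)) => Hl x y //=.
case: (boolP (x \in X)) => Hx; case: (boolP (y \in X)) => Hy.
- have [Hx1 Hx2] := oiP Hx; have [Hy1 Hy2] := oiP Hy.
  move/o_inj => /(_ (permlist_lt Hl Hx1) (permlist_lt Hl Hy1)).
  move/(permlist_inj Hl Hx1 Hy1) => E. rewrite Hx2 Hy2 E; reflexivity.
- by move=> E; move: Hy; rewrite -E o_X // permlist_lt // (proj1 (oiP Hx)).
- by move=> E; move: Hx; rewrite E o_X // permlist_lt // (proj1 (oiP Hy)).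
- done.
Qed.

Definition Lam l : {perm {set tab}} := perm (@Lf_inj l).

Lemma Lam_o l k : permlist l -> k < 15 -> Lam l (o k) = o (nth 0 l k).
Proof. by move=> Hl Hk; rewrite permE /Lf Hl o_X // oiK. Qed.

Lemma Lam_out l x : x \notin X -> Lam l x = x.
Proof. by move=> Hx; rewrite permE /Lf (negPf Hx) andbF. Qed.

Lemma LamM l1 l2 : permlist l1 -> permlist l2 -> permlist (compose l1 l2) ->
  Lam (compose l1 l2) = (Lam l1 * Lam l2)%g.
Proof.
move=> H1 H2 H12; apply/permP => x; rewrite permM.
case: (boolP (x \in X)) => Hx; last by rewrite !Lam_out.
have [Hk ->] := oiP Hx; rewrite !Lam_o ?permlist_lt //.
by rewrite /compose (nth_map 0) // (permlist_size H1).
Qed.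

Lemma Lam_inj l1 l2 : permlist l1 -> permlist l2 -> Lam l1 = Lam l2 -> l1 = l2.
Proof.
move=> H1 H2 E; apply: (@eq_from_nth _ 0).
  by rewrite (permlist_size H1) (permlist_size H2).
move=> k; rewrite (permlist_size H1) => Hk.
apply: o_inj; rewrite ?permlist_lt //.
by rewrite -!Lam_o // E.
Qed.

Lemma K6P sl tl : sl \in P3 -> tl \in P2 -> let q := Phl sl tl in
  [/\ permlist q, forall k, k < 15 -> shp (nth 0 q k) = shp k &
      forall a b, a < 15 -> b < 15 -> Lc (nth 0 q a) (nth 0 q b) = Lc a b].
Proof.
move=> Hs Ht; move: K6ok.
move/allP => /(_ _ Hs)/allP/(_ _ Ht) /and3P[H1 /allP H2 /allP H3]; split.
- exact: H1.
- by move=> k Hk; apply/eqP/H2; rewrite mem_iota.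
- move=> a b Ha Hb; apply/eqP; move: (H3 a); rewrite mem_iota => /(_ Ha)/allP/(_ b).
  by rewrite mem_iota => /(_ Hb).
Qed.

Lemma Aut0_Lam sl tl : sl \in P3 -> tl \in P2 -> Lam (Phl sl tl) \in Aut0 D6 Gd.
Proof.
move=> Hs Ht; have [Hp Hsh HL] := K6P Hs Ht.
rewrite inE; apply/and3P; split.
- apply/subsetP => x; rewrite inE; apply: contraR => Hx; by rewrite Lam_out.
- apply/forallP => a; apply/implyP => /XP[ka Hka ->].
  apply/forallP => b; apply/implyP => /XP[kb Hkb ->].
  rewrite !Lam_o // !orb_le_o ?permlist_lt // HL //.
- apply/allP => mu Hmu; rewrite eqEcard card_imset ?leqnn ?andbT; last exact: perm_inj.
  apply/subsetP => y /imsetP[x /(TlamP _ Hmu)[k [Hk Hsk ->]] ->].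
  apply/(TlamP _ Hmu); exists (nth 0 (Phl sl tl) k); rewrite Lam_o //.
  split; [exact: permlist_lt | by rewrite Hsh | reflexivity].
Qed.

Lemma Aut0_inv al : al \in Aut0 D6 Gd ->
  exists sl tl, [/\ sl \in P3, tl \in P2 & al = Lam (Phl sl tl)].
Proof.
rewrite inE => /and3P[Hon /forallP Hle /allP Hlev].
pose p k := oi (al (o k)).
have Hal : forall k, k < 15 -> p k < 15 /\ al (o k) = o (p k).
  move=> k Hk; have : al (o k) \in X by rewrite (perm_closed _ Hon) o_X.
  by case/oiP.
have Hs : forall k, k < 15 -> shp (p k) = shp k.
  move=> k Hk; have [_ _ Hsk _] := K2P Hk.
  have /eqP E := Hlev _ Hsk.
  have : al (o k) \in T_lamG (shp k) Gd.
    by rewrite -E; apply: imset_f; apply/(TlamP _ Hsk); exists k.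
  case/(TlamP _ Hsk) => j [Hj Hsj]; have [Hpk ->] := Hal k Hk.
  by move/o_inj => /(_ Hpk Hj) ->.
have HL : forall a b, a < 15 -> b < 15 -> Lc (p a) (p b) = Lc a b.
  move=> a b Ha Hb; have := Hle (o a); rewrite o_X //= => /forallP/(_ (o b)).
  rewrite o_X //= => /eqP; have [Hpa ->] := Hal a Ha; have [Hpb ->] := Hal b Hb.
  by rewrite !orb_le_o.
have Hi : forall a b, a < 15 -> b < 15 -> p a = p b -> a = b.
  move=> a b Ha Hb E; apply: (o_inj Ha Hb); apply: (@perm_inj _ al).
  rewrite (proj2 (Hal a Ha)) (proj2 (Hal b Hb)) E; reflexivity.
have [sl [tl [Hsl Htl Hp]]] := classify Hs HL Hi.
exists sl, tl; split => //; apply/permP => x.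
have [Hpl _ _] := K6P Hsl Htl.
case: (boolP (x \in X)) => Hx; last by rewrite Lam_out // (out_perm Hon).
have [Hk ->] := oiP Hx; rewrite Lam_o // -Hp //; exact: (proj2 (Hal _ Hk)).
Qed.

Lemma iot_lt t k : k < 15 -> iot t k < 15.
Proof.
move=> Hk; rewrite /iot; case: ifP => _; first exact: Hk.
have : all (fun k => nth 0 iotal k < 15) (iota 0 15) by vm_compute.
by move/allP/(_ k); rewrite mem_iota add0n => /(_ Hk).
Qed.

Lemma F5 eta k A : eta \in Gd' -> k < 15 -> A \in o k ->
  orbG Gd (tact eta A) = o (iot (pl eta) k).
Proof.
move=> He Hk /orbP[t Ht ->]; rewrite tact_tabl.
move: K5ok => /allP/(_ _ (Gd'_sub He))/allP/(_ k); rewrite mem_iota add0n => /(_ Hk).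
move/allP/(_ (act_l t (Rk k)) (orbL_mem _ Ht))/mapP => [t' Ht' E].
rewrite E; apply: orbG_eq; apply/orbP; by exists t'.
Qed.

Lemma nth_compose l1 l2 k : k < size l1 -> nth 0 (compose l1 l2) k = nth 0 l2 (nth 0 l1 k).
Proof. by move=> Hk; rewrite /compose (nth_map 0). Qed.

Definition comm (q : seq nat) := compose q iotal == compose iotal q.

Lemma commP q : permlist q -> comm q -> forall t k, k < 15 -> nth 0 q (iot t k) = iot t (nth 0 q k).
Proof.
move=> Hq /eqP E t k Hk; rewrite /iot; case: ifP => _; first reflexivity.
have := congr1 (fun l => nth 0 l k) E; rewrite /compose !(nth_map 0) //.
  by rewrite (permlist_size Hq).
Qed.

Lemma Aut0G_Lam sl tl : sl \in P3 -> tl \in P2 -> comm (Phl sl tl) ->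
  Lam (Phl sl tl) \in Aut0G D6 Gd Gd'.
Proof.
move=> Hs Ht Hc; have [Hp _ _] := K6P Hs Ht.
rewrite inE Aut0_Lam //=; apply/forallP => eta; apply/implyP => He.
apply/forallP => a; apply/implyP => /XP[k Hk ->].
apply/forallP => A; apply/implyP => HA; apply/forallP => B; apply/implyP.
rewrite (Lam_o Hp Hk) => HB.
rewrite (F5 He Hk HA) (F5 He (permlist_lt Hp Hk) HB) (Lam_o Hp (iot_lt _ Hk)).
by rewrite (commP Hp Hc _ Hk).
Qed.

Lemma pl_g3_notin : pl g3 \notin Gt.
Proof. rewrite pl_g3. vm_compute. reflexivity. Qed.

Lemma Aut0G_inv al : al \in Aut0G D6 Gd Gd' ->
  exists sl tl, [/\ sl \in P3, tl \in P2, comm (Phl sl tl) & al = Lam (Phl sl tl)].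
Proof.
rewrite inE => /andP[/Aut0_inv[sl [tl [Hs Ht ->]]] /forallP/(_ g3)].
rewrite g3_Gd' /= => H; exists sl, tl; split; [exact: Hs | exact: Ht | | reflexivity].
have [Hp _ _] := K6P Hs Ht.
have Hk : forall k, k < 15 -> nth 0 (Phl sl tl) (nth 0 iotal k) = nth 0 iotal (nth 0 (Phl sl tl) k).
  move=> k Hk; move/forallP: H => /(_ (o k)); rewrite (o_X Hk) /= => /forallP/(_ (tabl (Rk k))).
  rewrite mem_orbG_self /= => /forallP/(_ (tabl (Rk (nth 0 (Phl sl tl) k)))).
  rewrite (Lam_o Hp Hk) mem_orbG_self /=.
  rewrite (F5 g3_Gd' Hk (mem_orbG_self _ _)) (F5 g3_Gd' (permlist_lt Hp Hk) (mem_orbG_self _ _)).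
  rewrite /iot (negPf pl_g3_notin) (Lam_o Hp (@iot_lt [::] _ Hk)).
  move/eqP/o_inj; apply; [apply: permlist_lt Hp _; exact: (@iot_lt [::] _ Hk)|].
  exact: (@iot_lt [::] _ (permlist_lt Hp Hk)).
rewrite /comm; apply/eqP; apply: (@eq_from_nth _ 0).
  by rewrite /compose /Phl !size_map size_iota.
move=> k; rewrite /compose size_map (permlist_size Hp) => Hk15.
rewrite -/(compose _ _) -/(compose _ _) !nth_compose ?(permlist_size Hp) //; first exact: (esym (Hk k Hk15)).
Qed.

Lemma ls3_P3 (s : {perm 'I_3}) : ls s \in P3.
Proof.
case/andP: K12ok => /allL_ok/(_ (ls s)) H _.
by move: (H (size_ls s) (ls_lt s)); rewrite ls_uniq.
Qed.

Lemma ls2_P2 (s : {perm 'I_2}) : ls s \in P2.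
Proof.
case/andP: K12ok => _ /allL_ok/(_ (ls s)) H.
by move: (H (size_ls s) (ls_lt s)); rewrite ls_uniq.
Qed.

Lemma P3_ls l : l \in P3 -> exists s : {perm 'I_3}, ls s = l.
Proof.
move=> Hl; have : all (fun l => [&& size l == 3, uniq l & all (fun x => x < 3) l]) P3 by [].
by move/allP/(_ _ Hl)/and3P => [/eqP H1 H2 H3]; apply: ex_ls.
Qed.

Lemma P2_ls l : l \in P2 -> exists s : {perm 'I_2}, ls s = l.
Proof.
move=> Hl; have : all (fun l => [&& size l == 2, uniq l & all (fun x => x < 2) l]) P2 by [].
by move/allP/(_ _ Hl)/and3P => [/eqP H1 H2 H3]; apply: ex_ls.
Qed.

Lemma K7P s1 s2 t1 t2 : s1 \in P3 -> s2 \in P3 -> t1 \in P2 -> t2 \in P2 ->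
  Phl (compose s1 s2) (compose t1 t2) = compose (Phl s1 t1) (Phl s2 t2).
Proof.
move=> H1 H2 H3 H4.
by apply/eqP; move/allP: K7ok => /(_ _ H1)/allP/(_ _ H2)/allP/(_ _ H3)/allP/(_ _ H4).
Qed.

Lemma K8P s1 s2 t1 t2 : s1 \in P3 -> s2 \in P3 -> t1 \in P2 -> t2 \in P2 ->
  Phl s1 t1 = Phl s2 t2 -> s1 = s2 /\ t1 = t2.
Proof.
move=> H1 H2 H3 H4 E.
move/allP: K8ok => /(_ _ H1)/allP/(_ _ H2)/allP/(_ _ H3)/allP/(_ _ H4).
by rewrite E eqxx /= => /andP[/eqP -> /eqP ->].
Qed.

Lemma LamPM s1 s2 t1 t2 : s1 \in P3 -> s2 \in P3 -> t1 \in P2 -> t2 \in P2 ->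
  compose s1 s2 \in P3 -> compose t1 t2 \in P2 ->
  Lam (Phl (compose s1 s2) (compose t1 t2)) = (Lam (Phl s1 t1) * Lam (Phl s2 t2))%g.
Proof.
move=> H1 H2 H3 H4 H5 H6; have [Hp5 _ _] := K6P H5 H6.
rewrite K7P //; apply: LamM; first by have [] := K6P H1 H3.
- by have [] := K6P H2 H4.
- by rewrite -K7P.
Qed.

Definition PsiA (x : {perm 'I_3} * {perm 'I_2}) : {perm {set tab}} :=
  Lam (Phl (ls x.1) (ls x.2)).

Lemma PsiAM : {morph PsiA : x y / (x * y)%g}.
Proof.
move=> [s1 t1] [s2 t2]; rewrite /PsiA /= !lsM LamPM ?ls3_P3 ?ls2_P2 //.
- by rewrite -lsM ls3_P3.
- by rewrite -lsM ls2_P2.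
Qed.

Canonical PsiA_morph := @Morphism _ _ [set: {perm 'I_3} * {perm 'I_2}] PsiA (in2W PsiAM).

Lemma PsiA_injm : ('injm PsiA_morph)%g.
Proof.
apply/injmP => [[s1 t1] [s2 t2]] _ _; rewrite /= /PsiA /=.
have [Hp1 _ _] := K6P (ls3_P3 s1) (ls2_P2 t1); have [Hp2 _ _] := K6P (ls3_P3 s2) (ls2_P2 t2).
move/(Lam_inj Hp1 Hp2)/K8P => /(_ (ls3_P3 _) (ls3_P3 _) (ls2_P2 _) (ls2_P2 _)) [E1 E2].
by rewrite (ls_inj E1) (ls_inj E2).
Qed.

Lemma PsiA_im : (PsiA_morph @* [set: {perm 'I_3} * {perm 'I_2}])%g = Aut0 D6 Gd.
Proof.
rewrite morphimEdom; apply/setP => al; apply/imsetP/idP => [[x _ ->]|].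
  exact: Aut0_Lam (ls3_P3 _) (ls2_P2 _).
case/Aut0_inv => sl [tl [Hs Ht ->]].
have [s Es] := P3_ls Hs; have [t Et] := P2_ls Ht.
by exists (s, t); rewrite ?inE //= /PsiA /= Es Et.
Qed.

Definition PsiB (x : {perm 'I_2} * {perm 'I_2}) : {perm {set tab}} :=
  Lam (Phl (emb (ls x.1)) (ls x.2)).

Lemma K10P : (forall u, u \in P2 -> emb u \in P3) /\
  (forall u1 u2, u1 \in P2 -> u2 \in P2 -> emb (compose u1 u2) = compose (emb u1) (emb u2)).
Proof.
case/andP: K10ok => /allP H1 /allP H2; split; first exact: H1.
move=> u1 u2 Hu1 Hu2.
by apply/eqP; move/allP: (H2 _ Hu1) => /(_ _ Hu2).
Qed.

Lemma PsiBM : {morph PsiB : x y / (x * y)%g}.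
Proof.
have [Ke Kc] := K10P.
move=> [s1 t1] [s2 t2]; rewrite /PsiB /= !lsM Kc ?ls2_P2 // LamPM ?Ke ?ls2_P2 //.
- by rewrite -Kc ?ls2_P2 // -lsM Ke ?ls2_P2.
- by rewrite -lsM ls2_P2.
Qed.

Canonical PsiB_morph := @Morphism _ _ [set: {perm 'I_2} * {perm 'I_2}] PsiB (in2W PsiBM).

Lemma emb_inj : injective emb.
Proof. by move=> a b [] /(inj_map succn_inj). Qed.

Lemma PsiB_injm : ('injm PsiB_morph)%g.
Proof.
have [Ke _] := K10P.
apply/injmP => [[s1 t1] [s2 t2]] _ _; rewrite /= /PsiB /=.
have [Hp1 _ _] := K6P (Ke _ (ls2_P2 s1)) (ls2_P2 t1); have [Hp2 _ _] := K6P (Ke _ (ls2_P2 s2)) (ls2_P2 t2).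
move/(Lam_inj Hp1 Hp2)/K8P => /(_ (Ke _ (ls2_P2 _)) (Ke _ (ls2_P2 _)) (ls2_P2 _) (ls2_P2 _)) [E1 E2].
by rewrite (ls_inj (emb_inj E1)) (ls_inj E2).
Qed.

Lemma K9P sl tl : sl \in P3 -> tl \in P2 -> comm (Phl sl tl) = (sl \in map emb P2).
Proof.
move=> Hs Ht.
move: K9ok => /allP/(_ _ Hs)/allP/(_ _ Ht)/eqP E; exact: E.
Qed.

Lemma PsiB_im : (PsiB_morph @* [set: {perm 'I_2} * {perm 'I_2}])%g = Aut0G D6 Gd Gd'.
Proof.
have [Ke _] := K10P.
rewrite morphimEdom; apply/setP => al; apply/imsetP/idP => [[x _ ->]|].
  apply: Aut0G_Lam; [exact: Ke (ls2_P2 _) | exact: ls2_P2 |].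
  rewrite K9P; [exact: map_f (ls2_P2 _) | exact: Ke (ls2_P2 _) | exact: ls2_P2].
case/Aut0G_inv => sl [tl [Hs Ht Hc ->]].
move: Hc; rewrite K9P // => /mapP[ul Hul ->].
have [u Eu] := P2_ls Hul; have [t Et] := P2_ls Ht.
by exists (u, t); rewrite ?inE //= /PsiB /= Eu Et.
Qed.

Theorem theorem10p3p5 :
  isog (Aut0 D6 Gd) [set: {perm 'I_3} * {perm 'I_2}] /\
  isog (Aut0G D6 Gd Gd') [set: {perm 'I_2} * {perm 'I_2}].
Proof.
split.
- rewrite -PsiA_im isog_sym; exact: sub_isog (subxx _) PsiA_injm.
- rewrite -PsiB_im isog_sym; exact: sub_isog (subxx _) PsiB_injm.
Qed.
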